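(* Let $\mathfrak{n}$ be a complex semisimple Lie algebra and $z\in\mathfrak{n}$ an element such that the adjoint operator $\operatorname{ad}(z)$ on $\mathfrak{n}$ has exactly three distinct eigenvalues $0,\alpha,\beta$. Then $\alpha+\beta=0$. *)

(* Defs.v *)
From HB Require Import structures.
From mathcomp Require Import all_boot all_order all_algebra.
From mathcomp Require Import complex.
From mathcomp Require Import Rstruct.
Set Implicit Arguments. Unset Strict Implicit. Unset Printing Implicit Defensive.
Import Order.TTheory GRing.Theory Num.Theory.
Local Open Scope ring_scope.

Definition C : fieldType := (Rdefinitions.R)[i].

Record lie_bracket (V : vectType C) := LieBracket {
  lb : V -> V -> V;
  lb_linl : forall (a : C) (x y w : V), lb (a *: x + y) w = a *: lb x w + lb y w;
  lb_linr : forall (a : C) (x y w : V), lb w (a *: x + y) = a *: lb w x + lb w y;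
  lb_alt : forall x : V, lb x x = 0;
  lb_jacobi : forall x y w : V,
      lb x (lb y w) + lb y (lb w x) + lb w (lb x y) = 0
}.

Section LieDefs.
Variables (V : vectType C) (L : lie_bracket V).
Local Notation "[[ x , y ]]" := (lb L x y).

Definition is_ideal (I : {vspace V}) : Prop :=
  forall x y : V, x \in I -> [[x, y]] \in I.

(* Derived algebra [I, I]: the span of all brackets of elements of I
   (by bilinearity it is spanned by brackets of basis vectors). *)
Definition derived (I : {vspace V}) : {vspace V} :=
  (<< [seq [[u, v]] | u <- vbasis I, v <- vbasis I] >>)%VS.

Definition solvable_subspace (I : {vspace V}) : Prop :=
  exists k : nat, iter k derived I = 0%VS.

Definition semisimple : Prop :=
  forall I : {vspace V}, is_ideal I -> solvable_subspace I -> I = 0%VS.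

Definition ad_eigenvalue (z : V) (a : C) : Prop :=
  exists2 v : V, v != 0 & [[z, v]] = a *: v.
End LieDefs.

(* Main.v *)
Require Import Defs.
From HB Require Import structures.
From mathcomp Require Import all_boot all_order all_algebra.
From mathcomp Require Import complex Rstruct.
Set Implicit Arguments. Unset Strict Implicit. Unset Printing Implicit Defensive.
Import GRing.Theory.
Local Open Scope ring_scope.

Definition Cc : numClosedFieldType := (Rdefinitions.R)[i].
Lemma C_split (p : {poly C}) :
  exists rs : seq C, p = lead_coef p *: \prod_(r <- rs) ('X - r%:P).
Proof. have [rs H] := @closed_field_poly_normal Cc p. by exists rs. Qed.

Lemma ker_split n (M : 'M[C]_n.+1) (u : 'rV_n.+1) :
  (u <= kermx M)%MS -> u *m M = 0.
Proof. by move/sub_kermxP. Qed.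

Lemma mx_decomp n (A : 'M[C]_n) (a b : C) : 0 != a -> 0 != b -> a != b ->
  (forall c, eigenvalue A c -> [\/ c = 0, c = a | c = b]) ->
  exists K, forall u : 'rV_n, exists u0 u1 u2,
    [/\ u = u0 + u1 + u2, u0 *m (A - 0%:M) ^+ K = 0,
        u1 *m (A - a%:M) ^+ K = 0 & u2 *m (A - b%:M) ^+ K = 0].
Proof.
case: n A => [|n] A H0a H0b Hab Hspec.
  exists 0%N => u; exists u, 0, 0; rewrite !mul0mx !addr0; split=> //.
  by apply: thinmx0.
set p := mxminpoly A.
have [rs Hp] := C_split p.
rewrite (monicP (mxminpoly_monic A)) scale1r in Hp.
have Hrs : forall r, r \in rs -> [\/ r = 0, r = a | r = b].
  move=> r Hr; apply: Hspec; rewrite eigenvalue_root_min -/p Hp.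
  by rewrite root_prod_XsubC.
set f : {poly C} := ('X - 0%:P) * ('X - a%:P) * ('X - b%:P).
have Hdiv : \prod_(r <- rs) ('X - r%:P) %| f ^+ size rs.
  elim: rs Hrs {Hp} => [|r rs IH] Hrs; first by rewrite big_nil dvd1p.
  rewrite big_cons exprS /=; apply: dvdp_mul; last first.
    by apply: IH => r' Hr'; apply: Hrs; rewrite inE Hr' orbT.
  rewrite dvdp_XsubCl /root /f !hornerE.
  by have [->|->|->] := Hrs r (mem_head _ _); rewrite !subrr !(mul0r, mulr0).
exists (size rs) => u.
have Hq : horner_mx A (f ^+ size rs) = 0.
  by apply/mxminpoly_minP; rewrite -/p Hp.
have Hu : (u <= kermxpoly A (f ^+ size rs))%MS.
  by rewrite /kermxpoly Hq; apply: (submx_trans (submx1 u)); rewrite kermx0.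
have cop1 : coprimep (('X - 0%:P) ^+ size rs) (('X - a%:P) ^+ size rs).
  by rewrite coprimep_expl // coprimep_expr // coprimep_XsubC2 // subr0 eq_sym.
have cop2 : coprimep (('X - 0%:P) ^+ size rs * ('X - a%:P) ^+ size rs)
    (('X - b%:P) ^+ size rs).
  have nb0 : b - 0 != 0 by rewrite subr0 eq_sym.
  have nba : b - a != 0 by rewrite subr_eq0 eq_sym.
  have c1 := coprimep_XsubC2 nb0.
  have c2 := coprimep_XsubC2 nba.
  by rewrite coprimepMl !coprimep_expl // coprimep_expr.
rewrite /f !exprMn (kermxpolyM _ cop2) in Hu.
move/sub_addsmxP: Hu => [[v1 v2] /= ->].
have Hv1 := submxMl v1 (kermxpoly A (('X - 0%:P) ^+ size rs * ('X - a%:P) ^+ size rs)).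
rewrite (kermxpolyM _ cop1) in Hv1.
move/sub_addsmxP: Hv1 => [[w1 w2] /= ->].
have E c : horner_mx A (('X - c%:P) ^+ size rs) = (A - c%:M) ^+ size rs.
  by rewrite rmorphXn /= rmorphB /= horner_mx_X horner_mx_C.
exists (w1 *m kermxpoly A (('X - 0%:P) ^+ size rs)),
  (w2 *m kermxpoly A (('X - a%:P) ^+ size rs)),
  (v2 *m kermxpoly A (('X - b%:P) ^+ size rs)); split => //.
- by rewrite -mulmxA /kermxpoly -E mulmx_ker mulmx0.
- by rewrite -mulmxA /kermxpoly -E mulmx_ker mulmx0.
- by rewrite -mulmxA /kermxpoly -E mulmx_ker mulmx0.
Qed.

Section Basics.
Variables (V : vectType C) (L : lie_bracket V).
Local Notation "[[ x , y ]]" := (lb L x y).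

Lemma lbDl x y w : [[x + y, w]] = [[x, w]] + [[y, w]].
Proof. by have := lb_linl L 1 x y w; rewrite !scale1r. Qed.
Lemma lbDr x y w : [[w, x + y]] = [[w, x]] + [[w, y]].
Proof. by have := lb_linr L 1 x y w; rewrite !scale1r. Qed.
Lemma lb0l w : [[0, w]] = 0.
Proof. have H := lbDl 0 0 w; rewrite addr0 in H. by apply: (@addrI _ [[0, w]]); rewrite addr0 -H. Qed.
Lemma lb0r w : [[w, 0]] = 0.
Proof. have H := lbDr 0 0 w; rewrite addr0 in H. by apply: (@addrI _ [[w, 0]]); rewrite addr0 -H. Qed.
Lemma lbZl a x w : [[a *: x, w]] = a *: [[x, w]].
Proof. by have := lb_linl L a x 0 w; rewrite addr0 lb0l addr0. Qed.
Lemma lbZr a x w : [[w, a *: x]] = a *: [[w, x]].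
Proof. by have := lb_linr L a x 0 w; rewrite addr0 lb0r addr0. Qed.
Lemma lbNl x w : [[- x, w]] = - [[x, w]].
Proof. by rewrite -scaleN1r lbZl scaleN1r. Qed.
Lemma lbNr x w : [[w, - x]] = - [[w, x]].
Proof. by rewrite -scaleN1r lbZr scaleN1r. Qed.
Lemma lbBl x y w : [[x - y, w]] = [[x, w]] - [[y, w]].
Proof. by rewrite lbDl lbNl. Qed.
Lemma lbBr x y w : [[w, x - y]] = [[w, x]] - [[w, y]].
Proof. by rewrite lbDr lbNr. Qed.
Lemma lb_anti x y : [[x, y]] = - [[y, x]].
Proof.
apply/eqP; rewrite -subr_eq0 opprK.
have := lb_alt L (x + y); rewrite lbDl !lbDr !lb_alt add0r addr0 => ->.
by [].
Qed.
Lemma lb_der z x y : [[z, [[x, y]]]] = [[ [[z, x]], y]] + [[x, [[z, y]]]].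
Proof.
have J := lb_jacobi L z x y.
rewrite (lb_anti y z) lbNr (lb_anti y [[z, x]]) in J.
apply/eqP; rewrite -subr_eq0 -J; apply/eqP.
by rewrite opprD addrA addrAC.
Qed.

Variable z : V.
Definition Dc (c : C) (v : V) := [[z, v]] - c *: v.

Lemma DcD c u v : Dc c (u + v) = Dc c u + Dc c v.
Proof. by rewrite /Dc lbDr scalerDr opprD addrACA. Qed.
Lemma Dc0 c : Dc c 0 = 0.
Proof. by rewrite /Dc lb0r scaler0 subr0. Qed.
Lemma DcZ c s v : Dc c (s *: v) = s *: Dc c v.
Proof. by rewrite /Dc lbZr scalerBr !scalerA mulrC. Qed.
Lemma DcN c v : Dc c (- v) = - Dc c v.
Proof. by rewrite -scaleN1r DcZ scaleN1r. Qed.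
Lemma DcB c u v : Dc c (u - v) = Dc c u - Dc c v.
Proof. by rewrite DcD DcN. Qed.
Lemma Dc_comm c c' v : Dc c (Dc c' v) = Dc c' (Dc c v).
Proof.
rewrite /Dc !lbBr !lbZr !scalerBr !scalerA mulrC.
by rewrite !opprB !addrA addrAC [RHS]addrAC; congr (_ + _); rewrite addrAC.
Qed.

Fact Dc_lin c : linear (Dc c).
Proof. by move=> s u v; rewrite DcD DcZ. Qed.
HB.instance Definition _ c := GRing.isLinear.Build C V V *:%R (Dc c) (Dc_lin c).


Local Notation D := Dc.

Lemma iterD0 c k : iter k (D c) 0 = 0.
Proof. by elim: k => //= k ->; rewrite Dc0. Qed.
Lemma iterDD c k u v : iter k (D c) (u + v) = iter k (D c) u + iter k (D c) v.
Proof. by elim: k => //= k ->; rewrite DcD. Qed.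
Lemma iterDZ c k s v : iter k (D c) (s *: v) = s *: iter k (D c) v.
Proof. by elim: k => //= k ->; rewrite DcZ. Qed.
Lemma iterDN c k v : iter k (D c) (- v) = - iter k (D c) v.
Proof. by rewrite -scaleN1r iterDZ scaleN1r. Qed.
Lemma iterD_comm1 c c' k v : iter k (D c) (D c' v) = D c' (iter k (D c) v).
Proof. by elim: k => //= k ->; rewrite Dc_comm. Qed.
Lemma iterD_comm c c' k j v :
  iter k (D c) (iter j (D c') v) = iter j (D c') (iter k (D c) v).
Proof. by elim: j => //= j <-; rewrite iterD_comm1. Qed.

Definition Gen c k v := iter k (D c) v = 0.

Lemma Gen0 c k : Gen c k 0.
Proof. exact: iterD0. Qed.
Lemma GenD c k u v : Gen c k u -> Gen c k v -> Gen c k (u + v).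
Proof. by rewrite /Gen iterDD => -> ->; rewrite addr0. Qed.
Lemma Gen_le c k m v : (k <= m)%N -> Gen c k v -> Gen c m v.
Proof.
move=> /subnK <- H; rewrite /Gen iterD. by rewrite H iterD0.
Qed.

Lemma Gen_br a b k : forall i j x y, (i + j = k)%N -> Gen a i x -> Gen b j y ->
  Gen (a + b) k [[x, y]].
Proof.
rewrite /Gen; elim: k => [|k IH] i j x y Hk Hx Hy.
  move: Hk => /eqP; rewrite addn_eq0 => /andP[/eqP Hi _].
  by rewrite Hi /= in Hx; rewrite /= Hx lb0l.
case: i Hk Hx => [|i] Hk Hx; first by rewrite /= in Hx; rewrite Hx lb0l iterD0.
case: j Hk Hy => [|j] Hk Hy; first by rewrite /= in Hy; rewrite Hy lb0r iterD0.
rewrite iterSr.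
have -> : D (a + b) [[x, y]] = [[D a x, y]] + [[x, D b y]].
  rewrite /Dc lb_der lbBl lbBr lbZl lbZr scalerDl.
  by rewrite opprD addrACA.
have H1 : iter k (D (a + b)) [[D a x, y]] = 0.
  apply: (IH i j.+1) => //; first by move: Hk; rewrite addSn => -[].
  by rewrite -iterSr.
have H2 : iter k (D (a + b)) [[x, D b y]] = 0.
  apply: (IH i.+1 j) => //; first by move: Hk; rewrite addSn addnS => -[].
  by rewrite -iterSr.
by rewrite iterDD H1 H2 addr0.
Qed.

Lemma iterD_eig c c' k u : D c' u = 0 -> iter k (D c) u = (c' - c) ^+ k *: u.
Proof.
move=> Hu; elim: k => [|k IH] /=; first by rewrite scale1r.
rewrite IH DcZ exprSr -scalerA; congr (_ *: _).
move: Hu; rewrite /Dc => /eqP; rewrite subr_eq0 => /eqP ->.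
by rewrite scalerBl.
Qed.

Lemma sep2 c c' k m u : c != c' -> Gen c' m u -> Gen c k u -> u = 0.
Proof.
move=> Hcc; rewrite /Gen; elim: m u => [|m IH] u //= Hm Hk.
have Hu' : D c' u = 0.
  apply: IH; first by rewrite -iterSr.
  by rewrite iterD_comm1 Hk Dc0.
move: Hk; rewrite (iterD_eig _ _ Hu') => /eqP; rewrite scaler_eq0 expf_eq0 subr_eq0.
by rewrite eq_sym (negbTE Hcc) andbF /= => /eqP.
Qed.

Lemma notEig c k u : ~ ad_eigenvalue L z c -> Gen c k u -> u = 0.
Proof.
move=> Hne; rewrite /Gen; elim: k u => [|k IH] u //= Hk.
have Hu : D c u = 0 by apply: IH; rewrite -iterSr.
apply/eqP; apply: contraT => Hu0; exfalso; apply: Hne; exists u => //.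
by move: Hu; rewrite /Dc => /eqP; rewrite subr_eq0 => /eqP.
Qed.

Lemma kill c1 c2 c3 K m u2 u3 : c1 != c3 -> c2 != c3 ->
  Gen c1 m (u2 + u3) -> Gen c2 K u2 -> Gen c3 K u3 -> u3 = 0.
Proof.
move=> H13 H23 H1 H2 H3.
have Hy : iter K (D c2) u3 = 0.
  apply: (@sep2 c1 c3 m K) => //.
  - by rewrite /Gen iterD_comm H3 iterD0.
  - have := H1; rewrite /Gen => H1'.
    have : iter K (D c2) (iter m (D c1) (u2 + u3)) = 0 by rewrite H1' iterD0.
    by rewrite iterD_comm iterDD H2 add0r.
exact: (@sep2 c2 c3 K K).
Qed.

End Basics.

Import VectorInternalTheory.

Section Decomp.
Variables (V : vectType C) (L : lie_bracket V) (z : V).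

Definition fr (u : 'rV[C]_(dim V)) : 'rV[C]_(dim V) := v2r (lb L z (r2v u)).
Fact fr_lin : linear fr.
Proof. by move=> s u w; rewrite /fr linearP lbDr lbZr linearP. Qed.
HB.instance Definition _ := GRing.isLinear.Build C _ _ *:%R fr fr_lin.

Definition Az := lin1_mx fr.

Lemma rowD c w : r2v (w *m (Az - c%:M)) = Dc L z c (r2v w).
Proof. by rewrite mulmxBr mul_rV_lin1 mul_mx_scalar linearB linearZ /= /fr v2rK. Qed.

Lemma rowK c k w : r2v (w *m (Az - c%:M) ^+ k) = iter k (Dc L z c) (r2v w).
Proof.
elim: k => [|k IH] /=; first by rewrite mulmx1.
by rewrite exprSr mulmxA rowD IH.
Qed.

Lemma decomp a b : 0 != a -> 0 != b -> a != b ->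
  (forall c, ad_eigenvalue L z c -> [\/ c = 0, c = a | c = b]) ->
  exists K, forall v, exists u0 u1 u2,
    [/\ v = u0 + u1 + u2, Gen L z 0 K u0, Gen L z a K u1 & Gen L z b K u2].
Proof.
move=> H0a H0b Hab Hsp.
have Hsp' : forall c, eigenvalue Az c -> [\/ c = 0, c = a | c = b].
  move=> c /eigenvalueP [w Hw Hw0]; apply: Hsp; exists (r2v w).
    by apply: contra Hw0 => /eqP H; rewrite -(r2vK w) H linear0.
  have := congr1 r2v Hw; rewrite mul_rV_lin1 /fr v2rK => ->. by rewrite linearZ.
have [K HK] := mx_decomp H0a H0b Hab Hsp'.
exists K => v; have [u0 [u1 [u2 [Hu H0 H1 H2]]]] := HK (v2r v).
exists (r2v u0), (r2v u1), (r2v u2); split.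
- by rewrite -[v]v2rK Hu !linearD.
- by rewrite /Gen -rowK H0 linear0.
- by rewrite /Gen -rowK H1 linear0.
- by rewrite /Gen -rowK H2 linear0.
Qed.
End Decomp.

Lemma Cdouble (c : C) : c != 0 -> c + c != 0.
Proof.
rewrite -mulr2n; apply: contra => /eqP E.
by have := @Num.Theory.mulrn_eq0 Cc c 2; rewrite E eqxx /= => /esym ->.
Qed.
Lemma neqDl (x y : C) : y != 0 -> x + y != x.
Proof. by move=> Hy; rewrite -subr_eq0 addrAC subrr add0r. Qed.
Lemma neqDr (x y : C) : x != 0 -> x + y != y.
Proof. by move=> Hx; rewrite -subr_eq0 addrK. Qed.

Section Main.
Variables (V : vectType C) (L : lie_bracket V) (z : V) (K : nat).
Local Notation "[[ x , y ]]" := (lb L x y).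

Definition PL (c : C) (k : nat) : 'End(V) :=
  iter k (fun g => linfun (Dc L z c) \o g)%VF \1%VF.
Lemma PLE c k v : PL c k v = iter k (Dc L z c) v.
Proof. by elim: k => [|k IH] /=; rewrite ?id_lfunE // comp_lfunE lfunE /= IH. Qed.
Definition Gs c : {vspace V} := lker (PL c K).
Lemma memGs c v : (v \in Gs c) = (iter K (Dc L z c) v == 0).
Proof. by rewrite memv_ker PLE. Qed.

Lemma derived_sub (I S : {vspace V}) :
  (forall x y, x \in I -> y \in I -> [[x, y]] \in S) -> (derived L I <= S)%VS.
Proof.
move=> H; apply/span_subvP => w /allpairsP [ [x y] /= [Hx Hy ->] ].
by apply: H; apply: vbasis_mem.
Qed.

Variables (a b : C).
Hypothesis Hsp : forall c, ad_eigenvalue L z c <-> [\/ c = 0, c = a | c = b].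
Hypotheses (Ha : a != 0) (Hb : b != 0) (Hab : a != b).
Hypothesis HK : forall v, exists u0 u1 u2,
    [/\ v = u0 + u1 + u2, Gen L z 0 K u0, Gen L z a K u1 & Gen L z b K u2].

Lemma GenN c k u : Gen L z c k u -> Gen L z c k (- u).
Proof. by rewrite /Gen iterDN => ->; rewrite oppr0. Qed.

Lemma stab_gen c1 c2 c3 k v u1 u2 u3 : c1 != c2 -> c1 != c3 -> c2 != c3 ->
  v = u1 + u2 + u3 -> Gen L z c1 K u1 -> Gen L z c2 K u2 -> Gen L z c3 K u3 ->
  Gen L z c1 k v -> Gen L z c1 K v.
Proof.
move=> H12 H13 H23 Hv G1 G2 G3 Gv.
have Hm : Gen L z c1 (k + K) (u2 + u3).
  have -> : u2 + u3 = v - u1 by rewrite Hv -(addrA u1) [RHS]addrC addKr.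
  apply: GenD; first by apply: (Gen_le (leq_addr _ _)).
  by apply: GenN; apply: (Gen_le (leq_addl _ _)).
have E3 : u3 = 0 := kill H13 H23 Hm G2 G3.
have E2 : u2 = 0.
  have H32 : c3 != c2 by rewrite eq_sym.
  have Hm2 : Gen L z c1 (k + K) (u3 + u2) by rewrite addrC.
  exact: (kill H12 H32 Hm2 G3 G2).
by rewrite Hv E2 E3 !addr0.
Qed.

Lemma stab c k v : [\/ c = 0, c = a | c = b] -> Gen L z c k v -> Gen L z c K v.
Proof.
have [u0 [u1 [u2 [Hv G0 G1 G2] ] ] ] := HK v.
have Ha' : (0 : C) != a by rewrite eq_sym.
have Hb' : (0 : C) != b by rewrite eq_sym.
case=> ->.
- exact: (stab_gen Ha' Hb' Hab Hv G0 G1 G2).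
- apply: (stab_gen Ha Hab Hb' _ G1 G0 G2).
  by rewrite Hv (addrC u0).
- have Hba : b != a by rewrite eq_sym.
  apply: (stab_gen Hb Hba Ha' _ G2 G0 G1).
  by rewrite Hv addrC addrA.
Qed.

Lemma zeroG c k v : c != 0 -> c != a -> c != b -> Gen L z c k v -> v = 0.
Proof.
move=> H0 H1 H2; apply: notEig; rewrite Hsp.
by case=> /eqP; apply/negP.
Qed.

Definition N := (Gs a + Gs b)%VS.

Lemma toN c k w : c != 0 -> Gen L z c k w -> w \in N.
Proof.
move=> Hc Gw.
have [Eca|Nca] := eqVneq c a.
  rewrite -[w]addr0; apply: memv_add; last exact: mem0v.
  by rewrite memGs -Eca; apply/eqP; exact: (stab (Or32 _ _ Eca) Gw).
have [Ecb|Ncb] := eqVneq c b.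
  rewrite -[w]add0r; apply: memv_add; first exact: mem0v.
  by rewrite memGs -Ecb; apply/eqP; exact: (stab (Or33 _ _ Ecb) Gw).
by rewrite (zeroG Hc Nca Ncb Gw) mem0v.
Qed.

Lemma inN x : x \in N -> exists x1 x2,
  [/\ x = x1 + x2, Gen L z a K x1 & Gen L z b K x2].
Proof.
move/memv_addP => [x1 Hx1 [x2 Hx2 ->] ].
by exists x1, x2; split => //; apply/eqP; rewrite -memGs.
Qed.

Lemma brN c d x y : c + d != 0 -> Gen L z c K x -> Gen L z d K y -> [[x, y]] \in N.
Proof. by move=> H Gx Gy; apply: (toN H); apply: (Gen_br (erefl _) Gx Gy). Qed.

Hypothesis Hsum : a + b != 0.

Lemma N_ideal : is_ideal L N.
Proof.
move=> x y /inN [x1 [x2 [-> G1 G2] ] ].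
have [y0 [y1 [y2 [-> H0 H1 H2] ] ] ] := HK y.
have Haa := Cdouble Ha; have Hbb := Cdouble Hb.
have Hba : b + a != 0 by rewrite addrC.
have Ha0 : a + 0 != 0 by rewrite addr0.
have Hb0 : b + 0 != 0 by rewrite addr0.
rewrite !lbDl !lbDr; repeat apply: memvD.
- exact: (brN Ha0 G1 H0).
- exact: (brN Haa G1 H1).
- exact: (brN Hsum G1 H2).
- exact: (brN Hb0 G2 H0).
- exact: (brN Hba G2 H1).
- exact: (brN Hbb G2 H2).
Qed.

Lemma zeroS (S : {vspace V}) c k v :
  c != 0 -> c != a -> c != b -> Gen L z c k v -> v \in S.
Proof. by move=> H0 H1 H2 G; rewrite (zeroG H0 H1 H2 G) mem0v. Qed.

Lemma caseA : b = a + a -> solvable_subspace L N.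
Proof.
move=> Hba; exists 2%N.
have Hbb := Cdouble Hb.
have Hba2 : b + a != 0 by rewrite addrC.
have Nbba : b + b != a by rewrite -subr_eq0 {1}Hba addrAC addrK.
have S1 : (derived L N <= Gs b)%VS.
  apply: derived_sub => x y /inN [x1 [x2 [-> G1 G2] ] ] /inN [y1 [y2 [-> H1 H2] ] ].
  rewrite !lbDl !lbDr !memvD //.
  - rewrite memGs; apply/eqP; apply: (@stab b (K + K)); first by apply: Or33.
    by rewrite Hba; apply: (Gen_br (erefl _) G1 H1).
  - apply: (@zeroS _ (a + b) (K + K)) => //.
    + exact: neqDl. + exact: neqDr.
    + exact: (Gen_br (erefl _) G1 H2).
  - apply: (@zeroS _ (b + a) (K + K)) => //.
    + exact: neqDr. + exact: neqDl.
    + exact: (Gen_br (erefl _) G2 H1).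
  - apply: (@zeroS _ (b + b) (K + K)) => //.
    + exact: neqDl.
    + exact: (Gen_br (erefl _) G2 H2).
apply/eqP; rewrite -subv0 /=.
apply: derived_sub => x y /(subvP S1) Gx /(subvP S1) Gy.
rewrite memGs in Gx; rewrite memGs in Gy.
apply: (@zeroS _ (b + b) (K + K)) => //; first exact: neqDl.
exact: (Gen_br (erefl _) (eqP Gx) (eqP Gy)).
Qed.

Lemma caseC : b != a + a -> a != b + b -> solvable_subspace L N.
Proof.
move=> N1 N2; exists 1%N; apply/eqP; rewrite -subv0 /=.
have Haa := Cdouble Ha; have Hbb := Cdouble Hb.
have Hba2 : b + a != 0 by rewrite addrC.
apply: derived_sub => x y /inN [x1 [x2 [-> G1 G2] ] ] /inN [y1 [y2 [-> H1 H2] ] ].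
rewrite !lbDl !lbDr !memvD //.
- apply: (@zeroS _ (a + a) (K + K)) => //.
  + exact: neqDl. + by rewrite eq_sym. + exact: (Gen_br (erefl _) G1 H1).
- apply: (@zeroS _ (a + b) (K + K)) => //.
  + exact: neqDl. + exact: neqDr.
  + exact: (Gen_br (erefl _) G1 H2).
- apply: (@zeroS _ (b + a) (K + K)) => //.
  + exact: neqDr. + exact: neqDl.
  + exact: (Gen_br (erefl _) G2 H1).
- apply: (@zeroS _ (b + b) (K + K)) => //.
  + by rewrite eq_sym. + exact: neqDl. + exact: (Gen_br (erefl _) G2 H2).
Qed.

Lemma N_nonzero : N != 0%VS.
Proof.
have [v Hv0 Hv] : ad_eigenvalue L z a by apply/Hsp; apply: Or32.
apply: contra Hv0 => /eqP HN0.
have : v \in N.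
  apply: (@toN a 1%N) => //; rewrite /Gen /= /Dc Hv subrr //.
by rewrite HN0 memv0.
Qed.

End Main.

Unset Implicit Arguments.

Theorem lemma3p4 (V : vectType C) (L : lie_bracket V) (Hss : semisimple L)
  (z : V) (alpha beta : C)
  (Hdist : [/\ alpha != 0, beta != 0 & alpha != beta])
  (Heig : forall a : C, ad_eigenvalue L z a <-> [\/ a = 0, a = alpha | a = beta]) :
  alpha + beta = 0.
Proof.
case: Hdist => Ha Hb Hab.
apply/eqP; apply: contraT => Hsum.
have Ha' : (0 : C) != alpha by rewrite eq_sym.
have Hb' : (0 : C) != beta by rewrite eq_sym.
have [K HK] := decomp Ha' Hb' Hab (fun c => proj1 (Heig c)).
have Hba : beta != alpha by rewrite eq_sym.
have Hsum' : beta + alpha != 0 by rewrite addrC.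
have Heig' : forall c, ad_eigenvalue L z c <-> [\/ c = 0, c = beta | c = alpha].
  move=> c; split.
  - by move/Heig => [->|->|->]; [apply: Or31 | apply: Or33 | apply: Or32].
  - by move=> [->|->|->]; apply/Heig; [apply: Or31 | apply: Or33 | apply: Or32].
have HK' : forall v, exists u0 u1 u2,
    [/\ v = u0 + u1 + u2, Gen L z 0 K u0, Gen L z beta K u1 & Gen L z alpha K u2].
  move=> v; have [u0 [u1 [u2 [Hv G0 G1 G2] ] ] ] := HK v.
  by exists u0, u2, u1; split => //; rewrite Hv -!addrA (addrC u1).
have Hid := N_ideal Heig Ha Hb Hab HK Hsum.
have Hsol : solvable_subspace L (N L z K alpha beta).
  have [E1|N1] := eqVneq beta (alpha + alpha).
    exact: (caseA Heig Ha Hb Hab HK Hsum E1).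
  have [E2|N2] := eqVneq alpha (beta + beta).
    have := caseA Heig' Hb Ha Hba HK' Hsum' E2.
    by rewrite /N addvC.
  exact: (caseC K Heig Ha Hb Hsum N1 N2).
have := N_nonzero Heig Ha Hb Hab HK.
by rewrite (Hss _ Hid Hsol) eqxx.
Qed.
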